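(* For all $i\in\mathbb{Z}$, $\beta\in\Bbbk^*$ and $0\le p\le k$, $$\lambda_\beta^i(k,p)=\binom{k}{p}_\gamma\gamma^{-(k-p)p}\prod_{l=p+1}^kR_\beta^i(l,0),$$ where the empty product (for $p=k$) equals $1$.
   Context: $\Bbbk$ is an algebraically closed field of characteristic $0$, $n\ge1$, $\gamma\in\Bbbk$ a primitive $n$-th root of unity. $\binom{k}{p}_\gamma$ denotes the Gaussian ($\gamma$-)binomial coefficient. Define $R_\beta^i(k,l)=\beta\gamma^{-l}-\gamma^{k-1-i}$ for $0\le l<k$ and $R_\beta^i(k,k)=1$. Define $\lambda_\beta^i(0,0)=1$, and for $k\ge1$: $\lambda_\beta^i(k,0)=R_\beta^i(k,0)\lambda_\beta^i(k-1,0)$, $\lambda_\beta^i(k,l)=R_\beta^i(k,l)\lambda_\beta^i(k-1,l)+\lambda_\beta^i(k-1,l-1)$ for $0<l<k$, $\lambda_\beta^i(k,k)=1$. *)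

(* Defs.v *)
From HB Require Import structures.
From mathcomp Require Import all_boot all_order all_algebra.
Set Implicit Arguments. Unset Strict Implicit. Unset Printing Implicit Defensive.
Import GRing.Theory.
Local Open Scope ring_scope.

(* Gaussian gamma-binomial coefficient, defined by the q-Pascal recursion
   (i.e. the Gaussian polynomial evaluated at q; valid at roots of unity):
   [k,0] = 1, [0,p+1] = 0, [k+1,p+1] = [k,p] + q^(p+1) [k,p+1]. *)
Fixpoint qbinom (F : ringType) (q : F) (k p : nat) : F :=
  match k, p with
  | _, 0%N => 1
  | 0%N, _.+1 => 0
  | k'.+1, p'.+1 => qbinom q k' p' + q ^+ p'.+1 * qbinom q k' p
  end.

Definition Rb (F : fieldType) (g b : F) (i : int) (k l : nat) : F :=
  if l == k then 1 else b * g ^ (- (l%:Z)) - g ^ (k%:Z - 1 - i).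

(* lambda_beta^i(k,l) for 0 <= l <= k (values for l > k are irrelevant). *)
Fixpoint lam (F : fieldType) (g b : F) (i : int) (k : nat) : nat -> F :=
  match k with
  | 0%N => fun l => if l == 0%N then 1 else 0
  | k'.+1 => fun l =>
      if l == k'.+1 then 1 else
      match l with
      | 0%N => Rb g b i k'.+1 0 * lam g b i k' 0
      | l'.+1 => Rb g b i k'.+1 l * lam g b i k' l + lam g b i k' l'
      end
  end.

(* Main.v *)
Require Import Defs.
From mathcomp Require Import all_boot all_order all_algebra.
From mathcomp Require Import zify ring.
Import GRing.Theory.
Local Open Scope ring_scope.

Lemma qbinom_gt (F : ringType) (q : F) k p : (k < p)%N -> qbinom q k p = 0.
Proof.
elim: k p => [|k IH] [|p] //= hp.
by rewrite !IH ?mulr0 ?addr0 // ltnW.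
Qed.

Lemma qbinom_diag (F : ringType) (q : F) k : qbinom q k k = 1.
Proof. by elim: k => //= k ->; rewrite qbinom_gt ?mulr0 ?addr0. Qed.

Lemma qbSS (F : ringType) (q : F) k p : qbinom q k.+1 p.+1 = qbinom q k p + q ^+ p.+1 * qbinom q k p.+1.
Proof. by []. Qed.
Lemma qb0 (F : ringType) (q : F) k : qbinom q k 0 = 1.
Proof. by case: k. Qed.

Lemma qbinom_alt (F : comRingType) (q : F) k p : (p <= k)%N ->
  qbinom q k.+1 p.+1 = q ^+ (k - p) * qbinom q k p + qbinom q k p.+1.
Proof.
elim: k p => [|k IH] p hp.
  by case: p hp => //= _; rewrite !mulr0 !addr0 expr0 mulr1.
case: p hp => [|p] hp.
  rewrite qbSS {1}(IH 0%N) // qbSS subn0 !qb0.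
  by rewrite !exprS; ring.
have [->|hne] := eqVneq p k.
  by rewrite subSS subnn expr0 mul1r qbSS (@qbinom_gt _ _ k.+1 k.+2) // mulr0.
have hpk : (p < k)%N by rewrite ltn_neqAle hne.
have e1 := IH p (ltnW hpk).
have e2 := IH p.+1 hpk.
have e3 := qbSS _ q k p.
have e4 := qbSS _ q k p.+1.
rewrite (qbSS _ q k.+1 p.+1) {1}e1 {1}e2 e3 e4.
have -> : (k.+1 - p.+1 = (k - p.+1).+1)%N by lia.
have -> : (k - p = (k - p.+1).+1)%N by lia.
set e := (k - p.+1)%N.
rewrite !exprS.
ring.
Qed.

Theorem proposition3p12 (F : closedFieldType) (n : nat) (g : F)
  (hchar : [pchar F] =i pred0) (hn : (1 <= n)%N) (hg : n.-primitive_root g)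
  (i : int) (b : F) (hb : b != 0) (k p : nat) (hpk : (p <= k)%N) :
  lam g b i k p =
    qbinom g k p * g ^ (- (((k - p) * p)%N%:Z)) *
    \prod_(p.+1 <= l < k.+1) Rb g b i l 0.
Proof.
have g0 : g != 0.
  apply/negP => /eqP g0; move: (prim_expr_order hg); rewrite g0 expr0n.
  by case: n hn {hg} => // n' _ /eqP; rewrite eq_sym oner_eq0.
have Rb0 l : (0 < l)%N -> Rb g b i l 0 = b - g ^ (l%:Z - 1 - i).
  by move=> hl; rewrite /Rb; case: l hl => // l _ /=; rewrite oppr0 expr0z mulr1.
elim: k p hpk => [|k IH] p hpk.
  by case: p hpk => // _; rewrite /= big_geq // expr0z !mulr1.
rewrite [lam _ _ _ k.+1 p]/=.
have [->|hne] := eqVneq p k.+1.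
  by rewrite subnn mul0n oppr0 expr0z qbinom_diag big_geq // !mulr1.
case: p hpk hne => [|p] hpk hne.
  rewrite IH // qb0 qb0 !subn0 !muln0 oppr0 expr0z !mul1r [in RHS]big_nat_recr //=.
  by rewrite mulrC.
have hpk' : (p.+1 <= k)%N by move: hpk hne; rewrite eqSS; lia.
have pw (z1 z2 : int) (m : nat) : z1 = (z2 + m%:Z)%R -> g ^ z1 = g ^ z2 * g ^+ m.
  by move=> ->; rewrite expfzDr.
have pwN (z1 z2 : int) (m : nat) : z1 = (z2 - m%:Z)%R -> g ^ z1 = g ^ z2 * (g ^+ m)^-1.
  by move=> ->; rewrite expfzDr // -invr_expz.
rewrite !IH // ?ltnW //.
rewrite (big_ltn (m:=p.+1)) // [in RHS]big_nat_recr //.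
have -> : Rb g b i k.+1 p.+1 = b * g ^ (- (p.+1%:Z)) - g ^ (k.+1%:Z - 1 - i).
  by rewrite /Rb (negPf hne).
rewrite !Rb0 //.
set P := \prod_(_ <= _ < _) _.
set E := g ^ (- ((k.+1 - p.+1) * p.+1)%N%:Z).
set G := g ^ (k.+1%:Z - 1 - i).
set x := g ^+ p.+1.
set y := g ^+ (k - p).
have hx : x != 0 by rewrite expf_neq0.
have hy : y != 0 by rewrite expf_neq0.
have e1 : g ^ (- (p.+1%:Z)) = x^-1 by rewrite -invr_expz.
have e2 : g ^ (- ((k - p.+1) * p.+1)%N%:Z) = E * x by apply: pw; nia.
have e3 : g ^ (- ((k - p) * p)%N%:Z) = E * y by apply: pw; nia.
have e4 : g ^ (p.+1%:Z - 1 - i) = G * y^-1 by apply: pwN; lia.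
rewrite e1 e2 e3 e4.
have hQ1 := @qbinom_alt _ g k p (ltnW hpk').
have hQ2 := qbSS _ g k p.
set Q := qbinom g k.+1 p.+1.
rewrite -/y -/Q in hQ1; rewrite -/x -/Q in hQ2.
set A := qbinom g k p.+1; set C := qbinom g k p.
transitivity (b * (y * C + A) * E * P - G * (C + x * A) * E * P).
  by field; rewrite hx hy.
rewrite -hQ1 -hQ2 /=; ring.
Qed.
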